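(* For all integers $r\ge3$ and $n\ge4$, $\chi_D(K_r^{\times n})=r+1$.
   Context: $K_r$ is the complete graph on $r$ vertices. The weak (direct) product $G\times H$ has vertex set $V(G)\times V(H)$, with $(g_1,h_1)$ adjacent to $(g_2,h_2)$ iff $g_1g_2\in E(G)$ and $h_1h_2\in E(H)$; $K_r^{\times n}$ is the $n$-fold weak product of $K_r$ with itself. A coloring is distinguishing if the only graph automorphism mapping every color class onto itself is the identity; $\chi_D(G)$ is the minimum number of colors of a proper distinguishing coloring of $G$. *)

(* Defs.v *)
From mathcomp Require Import all_boot all_fingroup.
Set Implicit Arguments. Unset Strict Implicit. Unset Printing Implicit Defensive.

Definition K_adj (r : nat) : rel 'I_r := fun a b => a != b.

(* n-fold weak (direct) product of K_r: vertices are n-tuples of vertices of K_r,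
   adjacent iff adjacent in every coordinate. *)
Definition Kpow_vertex (r n : nat) := {ffun 'I_n -> 'I_r}.
Definition Kpow_adj (r n : nat) : rel (Kpow_vertex r n) :=
  fun u v => [forall i, K_adj (u i) (v i)].

Definition is_graph_aut (T : finType) (adj : rel T) (f : {perm T}) : Prop :=
  forall x y, adj (f x) (f y) = adj x y.

Definition proper_coloring (T : finType) (adj : rel T) (k : nat) (c : T -> 'I_k) : Prop :=
  forall x y, adj x y -> c x != c y.

Definition distinguishing (T : finType) (adj : rel T) (k : nat) (c : T -> 'I_k) : Prop :=
  forall f : {perm T}, is_graph_aut adj f -> (forall x, c (f x) = c x) -> f = 1%g.

Definition has_proper_dist_coloring (T : finType) (adj : rel T) (k : nat) : Prop :=
  exists c : T -> 'I_k, proper_coloring adj c /\ distinguishing adj c.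

Definition chi_D_eq (T : finType) (adj : rel T) (m : nat) : Prop :=
  has_proper_dist_coloring adj m /\
  forall k, has_proper_dist_coloring adj k -> m <= k.

(* Main.v *)
Require Import Defs.
From mathcomp Require Import all_boot all_fingroup all_algebra.
From mathcomp Require Import zify.
Set Implicit Arguments. Unset Strict Implicit. Unset Printing Implicit Defensive.
Import GRing.Theory.

Section Main.
Variables p k : nat.
Hypothesis hp : 1 < p.
Hypothesis hk : 2 < k.
Local Notation r := p.+1.
Local Notation n := k.+1.
Local Notation V := (Kpow_vertex r n).
Local Notation adj := (@Kpow_adj r n).

Definition indep (I : {set V}) := forall x y, x \in I -> y \in I -> ~~ adj x y.
Definition D (i : 'I_n) (a : 'I_r) : {set V} := [set x : V | x i == a].
Definition d := #|D ord0 ord0|.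
Definition upd (x : V) (i : 'I_n) (a : 'I_r) : V := [ffun j => if j == i then a else x j].

Lemma adjE x y : adj x y = [forall i, x i != y i].
Proof. by []. Qed.

Lemma in_D x i a : (x \in D i a) = (x i == a).
Proof. by rewrite inE. Qed.

Lemma updE x i a j : upd x i a j = if j == i then a else x j.
Proof. by rewrite ffunE. Qed.

Lemma upd_id x i : upd x i (x i) = x.
Proof. by apply/ffunP=> j; rewrite updE; case: eqP => // ->. Qed.

Lemma card_D_val i a b : #|D i a| = #|D i b|.
Proof.
have H : forall a b, #|D i a| <= #|D i b|.
  move=> a0 b0.
  have -> : #|D i a0| = #|[set upd x i b0 | x in D i a0]|.
    rewrite card_in_imset // => x y; rewrite !in_D => /eqP hx /eqP hy hxy.
    apply/ffunP=> j; have := congr1 (fun z : V => z j) hxy; rewrite /= !updE.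
    by case: eqP => [->|//]; rewrite hx hy.
  apply: subset_leq_card; apply/subsetP=> z /imsetP [x _ ->].
  by rewrite in_D updE eqxx.
by apply/eqP; rewrite eqn_leq !H.
Qed.

Definition swv (i j : 'I_n) (x : V) : V := [ffun l => x (tperm i j l)].

Lemma swvK i j : involutive (swv i j).
Proof. by move=> x; apply/ffunP=> l; rewrite !ffunE tpermK. Qed.

Lemma card_D_coord i j a : #|D i a| = #|D j a|.
Proof.
have -> : D j a = [set swv i j x | x in D i a].
  apply/setP=> y; apply/idP/imsetP.
    rewrite in_D => hy; exists (swv i j y); last by rewrite swvK.
    by rewrite in_D ffunE tpermL.
  by move=> [x hx ->]; move: hx; rewrite !inE ffunE tpermR.
by rewrite (card_imset _ (can_inj (swvK i j))).
Qed.

Lemma card_D i a : #|D i a| = d.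
Proof. by rewrite /d (card_D_coord i ord0) (card_D_val _ _ ord0). Qed.

Lemma sum_classes (m : nat) (c : V -> 'I_m) :
  \sum_(a : 'I_m) #|[set x | c x == a]| = #|V|.
Proof.
rewrite -sum1_card (partition_big c predT) //=.
by apply: eq_bigr => a _; rewrite -sum1_card; apply: eq_bigl => x; rewrite inE.
Qed.

Lemma rd : r * d = #|V|.
Proof.
rewrite -(sum_classes (fun x : V => x ord0)).
rewrite (eq_bigr (fun _ => d)); first by rewrite sum_nat_const card_ord.
by move=> a _; rewrite -(card_D ord0 a); congr #|_|; apply/setP=> x; rewrite !inE.
Qed.

Definition phi (x : V) : V := [ffun j => (x j - x ord0)%R].

Lemma phi_inj I : indep I -> {in I &, injective phi}.
Proof.
move=> hI x y hx hy hxy.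
have hj : forall j, (x j - y j = x ord0 - y ord0)%R.
  move=> j; have := congr1 (fun z : V => z j) hxy; rewrite /= !ffunE => e.
  have -> : x j = (y j - y ord0 + x ord0)%R by rewrite -e subrK.
  by rewrite addrAC [X in (X + _)%R]addrAC subrr add0r addrC.
case: (eqVneq (x ord0) (y ord0)) => h0.
  apply/ffunP=> j; apply/eqP; rewrite -subr_eq0 hj h0 subrr //.
have := hI x y hx hy; rewrite adjE => /forallPn [j]; rewrite negbK => /eqP e.
by move: (hj j); rewrite e subrr => /esym /eqP; rewrite subr_eq0 (negbTE h0).
Qed.

Lemma phi_sub (I : {set V}) : phi @: I \subset D ord0 0%R.
Proof. by apply/subsetP=> z /imsetP [x _ ->]; rewrite in_D ffunE subrr. Qed.

Lemma indep_card I : indep I -> #|I| <= d.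
Proof.
move=> hI; rewrite -(card_in_imset (phi_inj hI)) -(card_D ord0 0%R).
exact: subset_leq_card (phi_sub I).
Qed.

Lemma hit I : indep I -> #|I| = d -> forall pi : 'I_n -> {perm 'I_r},
  exists t, [ffun j => pi j t] \in I.
Proof.
move=> hI hc pi.
pose psi (x : V) : V := [ffun j => pi j (x j)].
have psi_inj : injective psi.
  move=> x y e; apply/ffunP=> j; have := congr1 (fun z : V => z j) e.
  by rewrite /psi !ffunE => /perm_inj.
pose J := psi @^-1: I.
have cJ : #|J| = d by rewrite card_preimset.
have iJ : indep J.
  move=> x y; rewrite !inE => hx hy; apply/negP=> hxy.
  have := hI _ _ hx hy; rewrite adjE; move/negP; apply.
  apply/forallP=> j; rewrite !ffunE (inj_eq perm_inj).
  by move: hxy; rewrite adjE => /forallP.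
have eJ : phi @: J = D ord0 0%R.
  apply/eqP; rewrite eqEcard phi_sub /= (card_in_imset (phi_inj iJ)) cJ.
  by rewrite card_D.
have : [ffun _ => 0%R] \in phi @: J by rewrite eJ in_D ffunE.
move=> /imsetP [x hx e].
exists (x ord0).
have hx0 : forall j, x j = x ord0.
  move=> j; have := congr1 (fun z : V => z j) e; rewrite !ffunE => /esym /eqP.
  by rewrite subr_eq0 => /eqP.
move: hx; rewrite inE; congr (_ \in I); apply/ffunP=> j; by rewrite !ffunE hx0.
Qed.

Definition z0 : 'I_r := ord0.
Definition z1 : 'I_r := inord 1.
Definition z2 : 'I_r := inord 2.

Lemma z1E : (z1 : nat) = 1.
Proof. by rewrite /z1 inordK // ltnS ltnW. Qed.
Lemma z2E : (z2 : nat) = 2.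
Proof. by rewrite /z2 inordK. Qed.
Lemma z01 : z0 != z1.
Proof. by apply/eqP=> /(congr1 (@nat_of_ord _)); rewrite z1E. Qed.
Lemma z02 : z0 != z2.
Proof. by apply/eqP=> /(congr1 (@nat_of_ord _)); rewrite z2E. Qed.
Lemma z12 : z1 != z2.
Proof. by apply/eqP=> /(congr1 (@nat_of_ord _)); rewrite z1E z2E. Qed.

Definition mkperm (a b : 'I_r) : {perm 'I_r} := (tperm z0 a * tperm (tperm z0 a z1) b)%g.

Lemma mkperm0 a b : a != b -> mkperm a b z0 = a.
Proof.
move=> hab; rewrite permM tpermL; set c := tperm z0 a z1.
have hc : c != a by rewrite /c -{2}(tpermL z0 a) (inj_eq perm_inj) eq_sym z01.
by rewrite tpermD // eq_sym.
Qed.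

Lemma mkperm1 a b : mkperm a b z1 = b.
Proof. by rewrite permM tpermL. Qed.

Lemma count01 (w : 'I_r -> V) (I : {set V}) :
  (forall t t', w t \in I -> w t' \in I -> t = t') -> (exists t, w t \in I) ->
  ((w z0 \in I) + (w z1 \in I) = ~~ [exists t, [&& t != z0, t != z1 & w t \in I]] :> nat).
Proof.
move=> hu [t0 ht0].
case: (boolP [exists t, _]) => [/existsP [t /and3P [h0 h1 ht]]|/existsPn hn] /=.
  case: (boolP (w z0 \in I)) => [h|_]; first by move: (hu _ _ h ht) h0 => ->; rewrite eqxx.
  case: (boolP (w z1 \in I)) => [h|_]; first by move: (hu _ _ h ht) h1 => ->; rewrite eqxx.
  by [].
have := hn t0; rewrite ht0 andbT negb_and !negbK => /orP [] /eqP e; subst t0.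
  rewrite ht0; case: (boolP (w z1 \in I)) => [h|//].
  by move: (hu _ _ ht0 h) z01 => ->; rewrite eqxx.
rewrite ht0; case: (boolP (w z0 \in I)) => [h|//].
by move: (hu _ _ ht0 h) z01 => ->; rewrite eqxx.
Qed.

Lemma clique_uniq (I : {set V}) (pi : 'I_n -> {perm 'I_r}) : indep I ->
  forall t t', [ffun j => pi j t] \in I -> [ffun j => pi j t'] \in I -> t = t'.
Proof.
move=> hI t t' h h'; apply/eqP; apply/negPn/negP=> ne.
have := hI _ _ h h'; rewrite adjE; move/negP; apply; apply/forallP=> j.
by rewrite !ffunE (inj_eq perm_inj).
Qed.

Lemma star (I : {set V}) : indep I -> #|I| = d -> forall i (a b : 'I_r) (x y : V), a != b ->
  (forall j, j != i -> x j != y j) ->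
  ((upd x i a \in I) + (upd y i b \in I) = (upd x i b \in I) + (upd y i a \in I) :> nat).
Proof.
move=> hI hc i a b x y hab hxy.
pose pi j := if j == i then mkperm a b else mkperm (x j) (y j).
pose pi' j := if j == i then (tperm z0 z1 * mkperm a b)%g else mkperm (x j) (y j).
pose v t : V := [ffun j => pi j t].
pose v' t : V := [ffun j => pi' j t].
have v0 : v z0 = upd x i a.
  apply/ffunP=> j; rewrite !ffunE /pi; case: eqP => [_|/eqP ne]; first exact: mkperm0.
  exact: mkperm0 (hxy _ ne).
have v1 : v z1 = upd y i b.
  by apply/ffunP=> j; rewrite !ffunE /pi; case: eqP => _; rewrite mkperm1.
have v'0 : v' z0 = upd x i b.
  apply/ffunP=> j; rewrite !ffunE /pi'; case: eqP => [_|/eqP ne].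
    by rewrite permM tpermL mkperm1.
  exact: mkperm0 (hxy _ ne).
have v'1 : v' z1 = upd y i a.
  apply/ffunP=> j; rewrite !ffunE /pi'; case: eqP => [_|/eqP ne].
    by rewrite permM tpermR mkperm0.
  by rewrite mkperm1.
have vv : forall t, t != z0 -> t != z1 -> v t = v' t.
  move=> t h0 h1; apply/ffunP=> j; rewrite !ffunE /pi /pi'; case: eqP => // _.
  by rewrite permM tpermD // eq_sym.
rewrite -v0 -v1 -v'0 -v'1.
rewrite (count01 (clique_uniq (pi:=pi) hI)); last exact: hit.
rewrite (count01 (clique_uniq (pi:=pi') hI)); last exact: hit.
congr (nat_of_bool (~~ _)); apply: eq_existsb => t.
case: (eqVneq t z0) => //= h0; case: (eqVneq t z1) => //= h1.
by have := vv t h0 h1; rewrite /v /v' => ->.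
Qed.

Definition oth (u w : 'I_r) : 'I_r :=
  if (z0 != u) && (z0 != w) then z0 else if (z1 != u) && (z1 != w) then z1 else z2.

Lemma oth_neq u w : (oth u w != u) && (oth u w != w).
Proof.
rewrite /oth; case: ifP => [/andP [h h']|h0]; first by rewrite h h'.
case: ifP => [/andP [h h']|h1]; first by rewrite h h'.
apply/andP; split; apply/eqP => e; move: h0 h1; rewrite -e z02 z12 /=.
  by move=> /negbFE/eqP h0 /negbFE/eqP h1; move: z01; rewrite h0 h1 eqxx.
by rewrite !andbT => /negbFE/eqP h0 /negbFE/eqP h1; move: z01; rewrite h0 h1 eqxx.
Qed.

Lemma delta (I : {set V}) : indep I -> #|I| = d -> forall i (a b : 'I_r) (x y : V),
  ((upd x i a \in I) + (upd y i b \in I) = (upd x i b \in I) + (upd y i a \in I) :> nat).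
Proof.
move=> hI hc i a b x y.
case: (eqVneq a b) => [->|hab]; first by rewrite addnC.
pose s : V := [ffun j => oth (x j) (y j)].
have e1 : (upd x i a \in I) + (upd s i b \in I) = (upd x i b \in I) + (upd s i a \in I) :> nat.
  apply: star => // j _; rewrite ffunE eq_sym; by case/andP: (oth_neq (x j) (y j)).
have e2 : (upd s i a \in I) + (upd y i b \in I) = (upd s i b \in I) + (upd y i a \in I) :> nat.
  apply: star => // j _; rewrite ffunE; by case/andP: (oth_neq (x j) (y j)).
lia.
Qed.

Lemma ivt (P : nat -> bool) N : P 0 -> ~~ P N -> exists m, [/\ m < N, P m & ~~ P m.+1].
Proof.
move=> h0; elim: N => [|N IH] hN; first by rewrite h0 in hN.
case: (boolP (P N)) => hPN; first by exists N.
by case: (IH hPN) => m [hm h1 h2]; exists m; split => //; rewrite ltnS ltnW.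
Qed.

Lemma sens (I : {set V}) x y : x \in I -> y \notin I ->
  exists i a b (z : V), upd z i a \in I /\ upd z i b \notin I.
Proof.
move=> hx hy.
pose mix m : V := [ffun j : 'I_n => if j < m then y j else x j].
have m0 : mix 0 = x by apply/ffunP=> j; rewrite ffunE.
have mn : mix n = y by apply/ffunP=> j; rewrite ffunE ltn_ord.
have := @ivt (fun m => mix m \in I) n; rewrite /= m0 mn => /(_ hx hy) [m [hm h1 h2]].
exists (Ordinal hm), (x (Ordinal hm)), (y (Ordinal hm)), (mix m); split.
  suff -> : upd (mix m) (Ordinal hm) (x (Ordinal hm)) = mix m by [].
  by rewrite -{2}(upd_id (mix m) (Ordinal hm)) ffunE ltnn.
suff -> : upd (mix m) (Ordinal hm) (y (Ordinal hm)) = mix m.+1 by [].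
apply/ffunP=> j; rewrite !ffunE.
case: (eqVneq j (Ordinal hm)) => [->|ne] /=; first by rewrite ltnSn.
have h : (j : nat) != m by apply: contra ne => /eqP e; apply/eqP/val_inj.
by rewrite [j < m.+1]ltnS [j <= m]leq_eqVlt (negbTE h).
Qed.

Lemma GL (I : {set V}) : indep I -> #|I| = d -> exists i a, I = D i a.
Proof.
move=> hI hc.
have : 0 < #|I| by rewrite hc /d card_gt0; apply/set0Pn; exists [ffun _ => ord0]; rewrite in_D ffunE.
rewrite card_gt0 => /set0Pn [x hx].
pose y : V := [ffun j => oth (x j) (x j)].
have hy : y \notin I.
  apply/negP=> hy; have := hI _ _ hx hy; rewrite adjE; move/negP; apply.
  apply/forallP=> j; rewrite ffunE eq_sym; by case/andP: (oth_neq (x j) (x j)).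
have [i [a [b [z [h1 h2]]]]] := sens hx hy.
exists i, a; apply/eqP; rewrite eq_sym eqEcard hc card_D leqnn andbT.
apply/subsetP=> w; rewrite in_D => /eqP hw.
have -> : w = upd w i a by rewrite -hw upd_id.
have := delta hI hc i a b z w; rewrite h1 (negbTE h2).
by case: (upd w i a \in I) => //.
Qed.

Lemma dict_sub i a j b : D i a \subset D j b -> i = j /\ a = b.
Proof.
move=> /subsetP hs.
have ij : i = j.
  apply/eqP; apply/negP=> /negP ne.
  pose x : V := [ffun l => if l == i then a else oth b b].
  have nji : (j == i) = false by rewrite eq_sym; apply/negbTE.
  have := hs x; rewrite !in_D !ffunE !eqxx nji => /(_ isT).
  by case/andP: (oth_neq b b) => /negbTE ->.
split=> //; subst j.
by have := hs [ffun _ => a]; rewrite !in_D !ffunE eqxx => /(_ isT) /eqP.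
Qed.

Lemma dict_disj i a j b : D i a :&: D j b = set0 -> i = j.
Proof.
move=> h; apply/eqP; apply/negP=> /negP ne.
pose x : V := [ffun l => if l == i then a else b].
have nji : (j == i) = false by rewrite eq_sym; apply/negbTE.
have : x \in D i a :&: D j b by rewrite inE !in_D !ffunE !eqxx nji !eqxx.
by rewrite h inE.
Qed.

Lemma all_eq m (f : 'I_m -> nat) d0 : (forall a, f a <= d0) ->
  \sum_(a < m) f a = m * d0 -> forall a, f a = d0.
Proof.
move=> hle hs a.
have : \sum_(b < m) (d0 - f b) == 0.
  rewrite sumnB; first by rewrite hs sum_nat_const card_ord subnn.
  by move=> b _; apply: hle.
rewrite sum_nat_eq0 => /forallP /(_ a) /implyP /(_ isT).
by rewrite subn_eq0 => h; apply/eqP; rewrite eqn_leq hle.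
Qed.

Definition gsw (j : 'I_n) (x : V) : V := upd x j (tperm z0 z1 (x j)).

Lemma gswK j : involutive (gsw j).
Proof.
move=> x; apply/ffunP=> l; rewrite /gsw !updE eqxx.
by case: eqP => [->|//]; rewrite tpermK.
Qed.

Lemma lower (m : nat) (c : V -> 'I_m) : proper_coloring adj c -> distinguishing adj c -> r < m.
Proof.
move=> hpr hd.
have rm : r <= m.
  have inj : injective (fun t : 'I_r => c [ffun _ => t]).
    move=> t t' e; apply/eqP; apply/negP=> /negP ne.
    have : adj [ffun _ => t] [ffun _ => t'] by rewrite adjE; apply/forallP=> j; rewrite !ffunE.
    by move=> /hpr; rewrite e eqxx.
  by have := leq_card _ inj; rewrite !card_ord.
rewrite ltn_neqAle rm andbT; apply/negP=> /eqP em.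
pose C (a : 'I_m) := [set x | c x == a].
have iC : forall a, indep (C a).
  move=> a x y; rewrite !inE => /eqP hx /eqP hy; apply/negP=> /hpr.
  by rewrite hx hy eqxx.
have cC : forall a, #|C a| = d.
  apply: all_eq; first by move=> a; exact: indep_card (iC a).
  by rewrite sum_classes -rd em.
pose x0 : V := [ffun _ => z0].
have [i [b hib]] := GL (iC (c x0)) (cC _).
pose j : 'I_n := if i == ord0 then ord_max else ord0.
have ji : j != i.
  rewrite /j; case: (eqVneq i ord0) => [->|ne]; last by rewrite eq_sym.
  by apply/eqP => /(congr1 (@nat_of_ord _)) /=; lia.
have ginj : injective (gsw j) by apply: can_inj (gswK j).
pose g := perm ginj.
have gaut : is_graph_aut adj g.
  move=> x y; rewrite !permE !adjE; apply: eq_forallb => l.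
  rewrite /gsw !updE; case: (eqVneq l j) => [->|//]; by rewrite (inj_eq perm_inj).
have gcol : forall x, c (g x) = c x.
  move=> x; rewrite permE.
  have [i' [b' hC]] := GL (iC (c x)) (cC _).
  have ii : i' = i.
    case: (eqVneq (c x) (c x0)) => e.
      have E : D i' b' = D i b by rewrite -hC -hib e.
      by have := @dict_sub i' b' i b; rewrite E subxx => /(_ isT) [].
    apply: (@dict_disj i' b' i b); rewrite -hC -hib; apply/setP=> z; rewrite !inE.
    by apply/negP=> /andP [/eqP -> /eqP]; move/eqP: e.
  have : x \in C (c x) by rewrite inE.
  rewrite hC in_D ii => /eqP hx.
  have nij : (i == j) = false by rewrite eq_sym; apply/negbTE.
  have : gsw j x \in C (c x) by rewrite hC in_D ii /gsw updE nij hx.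
  by rewrite inE => /eqP.
have := hd g gaut gcol.
move=> /(congr1 (fun h : {perm V} => h x0 j)); rewrite permE perm1 /gsw updE eqxx ffunE tpermL.
by move/eqP; rewrite eq_sym (negbTE z01).
Qed.

Definition q : 'I_n := ord0.
Definition dfc (v : 'I_r) : nat := p - v.
Definition dtot (x : V) : nat := \sum_(j | j != q) dfc (x j).
Definition vp : 'I_r := ord_max.
Definition vp1 : 'I_r := inord (p - 1).

Lemma vp1E : (vp1 : nat) = p - 1.
Proof. by rewrite /vp1 inordK // ltnS leq_subr. Qed.

Lemma dfc_vp : dfc vp = 0.
Proof. by rewrite /dfc /= subnn. Qed.
Lemma dfc_vp1 : dfc vp1 = 1.
Proof. rewrite /dfc vp1E; lia. Qed.
Lemma dfc_z0 : dfc z0 = p.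
Proof. by rewrite /dfc /= subn0. Qed.

Definition uvec (a b : 'I_n) : V :=
  [ffun j => if j == q then z0 else if j == a then z0 else if j == b then vp1 else vp].

Definition inU (x : V) := [exists ab : 'I_n * 'I_n, [&& 0 < ab.1, ab.1 < ab.2 & x == uvec ab.1 ab.2]].
Definition inR (x : V) := (x q == z0) && ((p.+2 <= dtot x) || inU x).
Definition Rs : {set V} := [set x | inR x].
Definition col (x : V) : 'I_r.+1 := if inR x then ord_max else widen_ord (leqnSn r) (x q).

Lemma dtot_upd (x : V) j v : j != q -> dtot (upd x j v) + dfc (x j) = dtot x + dfc v.
Proof.
move=> hj; rewrite /dtot (bigD1 j hj) [in RHS](bigD1 j hj) /= updE eqxx.
have -> : \sum_(i | (i != q) && (i != j)) dfc (upd x j v i) =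
          \sum_(i | (i != q) && (i != j)) dfc (x i).
  by apply: eq_bigr => i /andP [_ hi]; rewrite updE (negbTE hi).
by rewrite addnAC addnC [RHS]addnAC [RHS]addnC [dfc v + _]addnC.
Qed.

Lemma dtot2 (x : V) a b : a != q -> b != q -> a != b ->
  (forall l, l != q -> l != a -> l != b -> x l = vp) -> dtot x = dfc (x a) + dfc (x b).
Proof.
move=> ha hb hab hl; rewrite /dtot (bigD1 a ha) (bigD1 b) /=; last by rewrite hb eq_sym.
rewrite big1 ?addn0 // => l /andP [/andP [h1 h2] h3]; by rewrite hl // dfc_vp.
Qed.

Lemma dtot3 (x : V) a b c : a != q -> b != q -> c != q -> a != b -> a != c -> b != c ->
  (forall l, l != q -> l != a -> l != b -> l != c -> x l = vp) ->
  dtot x = dfc (x a) + dfc (x b) + dfc (x c).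
Proof.
move=> ha hb hc hab hac hbc hl; rewrite /dtot (bigD1 a ha) (bigD1 b) /=; last by rewrite hb eq_sym.
rewrite (bigD1 c) /=; last by rewrite hc eq_sym hac eq_sym hbc.
rewrite big1 ?addn0 ?addnA // => l /andP [/andP [/andP [h1 h2] h3] h4]; by rewrite hl // dfc_vp.
Qed.

Lemma uvecE (a b : 'I_n) : 0 < a -> a < b ->
  [/\ uvec a b q = z0, uvec a b a = z0, uvec a b b = vp1 &
      forall l, l != q -> l != a -> l != b -> uvec a b l = vp].
Proof.
move=> ha hab.
have aq : (a == q) = false by apply/negbTE; rewrite -val_eqE /= -lt0n.
have bq : (b == q) = false by apply/negbTE; rewrite -val_eqE /= -lt0n; lia.
have ba : (b == a) = false by apply/negbTE; rewrite -val_eqE /=; lia.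
split; rewrite ?ffunE ?eqxx ?aq ?bq ?ba //.
by move=> l h1 h2 h3; rewrite ffunE (negbTE h1) (negbTE h2) (negbTE h3).
Qed.

Lemma dtot_uvec (a b : 'I_n) : 0 < a -> a < b -> dtot (uvec a b) = p.+1.
Proof.
move=> ha hab; have [e1 e2 e3 e4] := uvecE ha hab.
have aq : a != q by rewrite -val_eqE /= -lt0n.
have bq : b != q by rewrite -val_eqE /= -lt0n; lia.
have ab : a != b by rewrite -val_eqE /=; lia.
by rewrite (dtot2 aq bq ab e4) e2 e3 dfc_z0 dfc_vp1 addn1.
Qed.

Lemma inU_dtot (x : V) : inU x -> dtot x = p.+1.
Proof. by move=> /existsP [[a b] /and3P [ha hab /eqP ->]]; apply: dtot_uvec. Qed.

Lemma inU_q (x : V) : inU x -> x q = z0.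
Proof. by move=> /existsP [[a b] /and3P [ha hab /eqP ->]]; case: (uvecE ha hab). Qed.

Lemma uvec_val (a b l : 'I_n) : (uvec a b l : nat) =
  if l == q then 0 else if l == a then 0 else if l == b then p - 1 else p.
Proof. rewrite ffunE; case: (l == q) => //; case: (l == a) => //; case: (l == b) => //; by rewrite vp1E. Qed.

Lemma upd_upd (x : V) j a b : upd (upd x j a) j b = upd x j b.
Proof. by apply/ffunP=> l; rewrite !updE; case: (l == j). Qed.

Definition o1 : 'I_n := inord 1.
Definition o2 : 'I_n := inord 2.
Definition o3 : 'I_n := inord 3.
Lemma o1E : (o1 : nat) = 1. Proof. by rewrite /o1 inordK //; lia. Qed.
Lemma o2E : (o2 : nat) = 2. Proof. by rewrite /o2 inordK //; lia. Qed.
Lemma o3E : (o3 : nat) = 3. Proof. by rewrite /o3 inordK //; lia. Qed.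

Lemma pick2 (j : 'I_n) : exists j1 j2 : 'I_n, [/\ j2 < j1, 0 < j2, j1 != j & j2 != j].
Proof.
case: (eqVneq j o1) => [->|h1].
  by exists o3, o2; rewrite -!val_eqE /= o1E o2E o3E.
case: (eqVneq j o2) => [->|h2].
  by exists o3, o1; rewrite -!val_eqE /= o1E o2E o3E.
by exists o2, o1; rewrite o1E o2E eq_sym h2 eq_sym h1.
Qed.

Definition Ncnt j b := #|Rs :&: D j b|.

Lemma Mstep (j : 'I_n) (b : 'I_r) : j != q -> b < p -> Ncnt j (inord b.+1) < Ncnt j b.
Proof.
move=> hj hb; set b' : 'I_r := inord b.+1.
have b'E : (b' : nat) = b.+1 by rewrite inordK.
have dfcb : dfc b = (dfc b').+1 by rewrite /dfc b'E; lia.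
pose Psi (x : V) := upd x j b.
have qj : (q == j) = false by apply/negbTE; rewrite eq_sym.
have inj : {in Rs :&: D j b' &, injective Psi}.
  move=> x y; rewrite !inE => /andP [_ /eqP hx] /andP [_ /eqP hy] e.
  have ex : x = upd (Psi x) j b' by rewrite /Psi upd_upd -hx upd_id.
  have ey : y = upd (Psi y) j b' by rewrite /Psi upd_upd -hy upd_id.
  by rewrite ex ey e.
rewrite /Ncnt -(card_in_imset inj); apply: proper_card; rewrite properE; apply/andP; split.
  apply/subsetP=> z /imsetP [x]; rewrite !inE => /andP [hR /eqP hx] ->.
  rewrite /Psi updE eqxx eqxx andbT.
  have ed : dtot (upd x j b) = (dtot x).+1.
    by have := dtot_upd x b hj; rewrite hx dfcb; lia.
  move: hR; rewrite /inR updE qj => /andP [-> /orP [h|h]] /=; rewrite ed.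
    by rewrite ltnS ltnW.
  by rewrite (inU_dtot h) leqnn.
have [j1 [j2 [h21 h2 h1j h2j]]] := pick2 j.
have j1q : j1 != q by rewrite -val_eqE /=; lia.
have j2q : j2 != q by rewrite -val_eqE /=; lia.
have j12 : j1 != j2 by rewrite -val_eqE /=; lia.
pose w : V := [ffun l => if l == q then z0 else if l == j then b else
                if l == j1 then inord (p - 1 - b) else if l == j2 then vp1 else vp].
have wq : w q = z0 by rewrite ffunE eqxx.
have wj : w j = b by rewrite ffunE (negbTE hj) eqxx.
have wj1 : (w j1 : nat) = p - 1 - b.
  by rewrite ffunE (negbTE j1q) (negbTE h1j) eqxx inordK //; lia.
have wj2 : w j2 = vp1 by rewrite ffunE (negbTE j2q) (negbTE h2j) eq_sym (negbTE j12) eqxx.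
have wl : forall l, l != q -> l != j -> l != j1 -> l != j2 -> w l = vp.
  by move=> l a1 a2 a3 a4; rewrite ffunE (negbTE a1) (negbTE a2) (negbTE a3) (negbTE a4).
have dw : dtot w = p.+2.
  rewrite (dtot3 hj j1q j2q _ _ j12 wl); try by rewrite eq_sym.
  rewrite wj wj2 dfc_vp1 /dfc wj1; lia.
apply/subsetPn; exists w.
  by rewrite !inE wj eqxx andbT /inR wq eqxx dw leqnn.
apply/negP=> /imsetP [x]; rewrite !inE => /andP [hR /eqP hx] e.
have ex : x = upd w j b' by rewrite e /Psi upd_upd -hx upd_id.
move: hR; rewrite ex /inR => /andP [_ /orP [h|h]].
  have := dtot_upd w b' hj; rewrite wj dw dfcb; lia.
move: h => /existsP [[a0 b0] /and3P [ha hab /eqP E]] /=.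
have E1 := congr1 (fun z : V => (z j1 : nat)) E.
have E2 := congr1 (fun z : V => (z j2 : nat)) E.
move: E1 E2 => /=; rewrite !uvec_val !updE (negbTE j1q) (negbTE j2q) (negbTE h1j) (negbTE h2j) wj1 wj2 vp1E.
case: (eqVneq j2 a0) => [e2|n2]; first by lia.
case: (eqVneq j2 b0) => [e2|n2']; last by lia.
case: (eqVneq j1 a0) => [e1|n1]; first by move: hab h21; rewrite /= -e1 -e2; lia.
case: (eqVneq j1 b0) => [e1|n1']; first by move: j12; rewrite e1 -e2 eqxx.
lia.
Qed.

Lemma Mstep' (j : 'I_n) (c c' : 'I_r) : j != q -> (c' : nat) = c.+1 -> Ncnt j c' < Ncnt j c.
Proof.
move=> hj e.
have hc : c < p by have := ltn_ord c'; rewrite e.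
have -> : c' = inord c.+1 by apply/val_inj; rewrite /= inordK // -e.
exact: Mstep.
Qed.

Lemma Mlt (j : 'I_n) : j != q -> forall b b' : 'I_r, b < b' -> Ncnt j b' < Ncnt j b.
Proof.
move=> hj b b' hbb'.
suff H : forall m (c c' : 'I_r), (c' : nat) = c + m.+1 -> Ncnt j c' < Ncnt j c.
  by apply: (H (b' - b.+1)); lia.
elim=> [|m IH] c c' e; first by apply: Mstep' hj _; rewrite e addn1.
have hlt : c + m.+1 < r by have := ltn_ord c'; lia.
pose c'' : 'I_r := inord (c + m.+1).
have ec : (c'' : nat) = c + m.+1 by rewrite inordK.
apply: ltn_trans (IH c c'' ec).
by apply: Mstep' hj _; rewrite e ec addnS.
Qed.

Definition S0 (i : 'I_n) : {set V} := [set x : V | [&& x q == z0, p.+2 <= dtot x & x i == z0]].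
Definition U0 (i : 'I_n) : {set V} := [set x : V | inU x && (x i == z0)].

Lemma q_neq (i : 'I_n) : i != q -> 0 < i.
Proof. by move=> h; rewrite lt0n; apply: contra h => /eqP e; apply/eqP/val_inj. Qed.

Lemma U0E (i : 'I_n) : i != q -> U0 i = [set uvec i l | l in [set l : 'I_n | i < l]].
Proof.
move=> hi; apply/setP=> x; apply/idP/imsetP.
  rewrite inE => /andP [/existsP [[a b] /and3P [ha hab /eqP E]] /eqP xi] /=.
  move: ha hab E => /= ha hab E.
  have := congr1 (fun z : V => (z i : nat)) E; rewrite xi uvec_val /= (negbTE hi).
  case: (eqVneq i a) => [ia _|ina]; last by case: ifP => _ /=; lia.
  by exists b; rewrite ?inE ia.
move=> [l]; rewrite inE => hl ->.
have hi0 := q_neq hi.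
rewrite inE; apply/andP; split.
  by apply/existsP; exists (i, l); rewrite /= hi0 hl eqxx.
by rewrite -val_eqE /= uvec_val (negbTE hi) eqxx.
Qed.

Lemma U0_card (i : 'I_n) : i != q -> #|U0 i| = #|[set l : 'I_n | i < l]|.
Proof.
move=> hi; rewrite U0E // card_in_imset // => l l'; rewrite !inE => hl hl' e.
have := congr1 (fun z : V => (z l : nat)) e; rewrite !uvec_val.
have lq : (l == q) = false by apply/negbTE; rewrite -val_eqE /=; lia.
have li : (l == i) = false by apply/negbTE; rewrite -val_eqE /=; lia.
rewrite lq li eqxx; case: (eqVneq l l') => // _; lia.
Qed.

Lemma Rs0 (i : 'I_n) : i != q -> Rs :&: D i z0 = S0 i :|: U0 i.
Proof.
move=> hi; apply/setP=> x; rewrite !inE /inR.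
case: (boolP (inU x)) => hU; last by rewrite /= !orbF -andbA.
by rewrite (inU_q hU) (inU_dtot hU) ltnn eqxx.
Qed.

Lemma dtot_swv (i i' : 'I_n) (x : V) : i != q -> i' != q -> dtot (swv i i' x) = dtot x.
Proof.
move=> hi hi'; rewrite /dtot [RHS](reindex_inj (@perm_inj _ (tperm i i'))) /=.
apply: eq_big => l; last by move=> _; rewrite ffunE.
have tq : tperm i i' q = q by rewrite tpermD.
by rewrite -[in RHS]tq (inj_eq perm_inj).
Qed.

Lemma S0_card (i i' : 'I_n) : i != q -> i' != q -> #|S0 i| = #|S0 i'|.
Proof.
move=> hi hi'.
have tq : tperm i i' q = q by rewrite tpermD.
have -> : S0 i' = [set swv i i' x | x in S0 i].
  apply/setP=> y; apply/idP/imsetP.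
    rewrite inE => /and3P [yq yd yi]; exists (swv i i' y); last by rewrite swvK.
    by rewrite inE !ffunE tq yq dtot_swv // yd tpermL yi.
  move=> [x]; rewrite inE => /and3P [xq xd xi] ->.
  by rewrite inE !ffunE tq xq dtot_swv // xd tpermR xi.
by rewrite (card_imset _ (can_inj (swvK i i'))).
Qed.

Lemma N0_split (i : 'I_n) : i != q -> Ncnt i z0 = #|S0 i| + #|[set l : 'I_n | i < l]|.
Proof.
move=> hi; rewrite /Ncnt Rs0 // cardsU -U0_card //.
suff -> : S0 i :&: U0 i = set0 by rewrite cards0 subn0.
apply/setP=> x; rewrite !inE; apply/negP=> /andP [/and3P [_ h _] /andP [hU _]].
by move: h; rewrite (inU_dtot hU) ltnn.
Qed.

Lemma N0_lt (i i' : 'I_n) : i != q -> i' != q -> i < i' -> Ncnt i' z0 < Ncnt i z0.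
Proof.
move=> hi hi' hii'; rewrite !N0_split // (S0_card hi' hi) ltn_add2l.
apply: proper_card; rewrite properE; apply/andP; split.
  by apply/subsetP=> l; rewrite !inE; apply: ltn_trans.
by apply/subsetPn; exists i'; rewrite !inE ?ltnn.
Qed.

Lemma incr_id (s : 'I_r -> 'I_r) : (forall a b : 'I_r, a < b -> s a < s b) -> forall a, s a = a.
Proof.
move=> hs.
have up : forall m (a : 'I_r), (a : nat) = m -> a <= s a.
  elim=> [|m IH] a e; first by rewrite e.
  have hm : m < r by have := ltn_ord a; lia.
  have := IH (inord m) (inordK hm).
  have := hs (inord m) a; rewrite inordK // e ltnSn => /(_ isT).
  lia.
have dn : forall m (a : 'I_r), (a : nat) + m = p -> s a <= a.
  elim=> [|m IH] a e; first by rewrite addn0 in e; rewrite e -ltnS ltn_ord.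
  have hm : a.+1 < r by lia.
  have e' : (inord a.+1 : 'I_r) + m = p by rewrite inordK //; lia.
  have := IH (inord a.+1) e'.
  have := hs a (inord a.+1); rewrite inordK // ltnSn => /(_ isT).
  lia.
move=> a; apply/val_inj/eqP; rewrite eqn_leq (dn (p - a)) ?(up a) //.
by have := ltn_ord a; lia.
Qed.

Lemma col_proper : proper_coloring adj col.
Proof.
move=> x y; rewrite adjE => /forallP /(_ q) hq.
rewrite /col; case: (boolP (inR x)) => hx; case: (boolP (inR y)) => hy.
- by move: hq; case/andP: hx => /eqP -> _; case/andP: hy => /eqP ->; rewrite eqxx.
- by rewrite -val_eqE /= neq_ltn ltn_ord orbT.
- by rewrite -val_eqE /= neq_ltn ltn_ord.
- by rewrite -val_eqE /=.
Qed.

Lemma ClR : [set x | col x == ord_max] = Rs.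
Proof.
apply/setP=> x; rewrite !inE /col; case: (inR x); first by rewrite eqxx.
by rewrite -val_eqE /=; apply/negbTE; rewrite neq_ltn ltn_ord.
Qed.

Lemma Cla (a : 'I_r) : a != z0 -> [set x | col x == widen_ord (leqnSn r) a] = D q a.
Proof.
move=> ha; apply/setP=> x; rewrite !inE /col.
case: (boolP (inR x)) => hx.
  case/andP: hx => /eqP -> _.
  have h1 : (p.+1 == (a : nat)) = false by apply/negbTE; rewrite eq_sym neq_ltn ltn_ord.
  have h2 : (z0 == a) = false by apply/negbTE; rewrite eq_sym.
  by rewrite h2 -val_eqE /= h1.
by rewrite -val_eqE /=.
Qed.

Lemma D_indep i a : indep (D i a).
Proof.
move=> x y; rewrite !in_D => /eqP hx /eqP hy; rewrite adjE; apply/forallPn.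
by exists i; rewrite hx hy eqxx.
Qed.

Lemma img_dict (f : {perm V}) : is_graph_aut adj f -> forall i a, exists j b, f @: D i a = D j b.
Proof.
move=> haut i a.
have hc : #|f @: D i a| = d by rewrite card_imset; [exact: card_D | exact: perm_inj].
apply: GL hc.
move=> y1 y2 /imsetP [x1 h1 ->] /imsetP [x2 h2 ->]; rewrite haut; exact: (D_indep h1 h2).
Qed.

Lemma col_dist : distinguishing adj col.
Proof.
move=> f haut hcol.
have img := img_dict haut.
have finj : injective (fun A : {set V} => f @: A) := imset_inj (@perm_inj _ f).
have fC : forall kk, f @: [set x | col x == kk] = [set x | col x == kk].
  move=> kk; apply/eqP; rewrite eqEcard card_imset ?leqnn ?andbT; last exact: perm_inj.
  by apply/subsetP=> y /imsetP [x hx ->]; move: hx; rewrite !inE hcol.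
have cnt : forall (A : {set V}) kk,
    #|f @: A :&: [set x | col x == kk]| = #|A :&: [set x | col x == kk]|.
  move=> A kk; rewrite -{1}fC -imsetI; last by move=> ? ? _ _; apply: perm_inj.
  by rewrite card_imset //; apply: perm_inj.
have same : forall i a b j c j' c', a != b -> f @: D i a = D j c -> f @: D i b = D j' c' -> j = j'.
  move=> i a b j c j' c' hab e e'; apply: (@dict_disj j c j' c').
  rewrite -e -e' -imsetI; last by move=> ? ? _ _; apply: perm_inj.
  have -> : D i a :&: D i b = set0.
    by apply/setP=> x; rewrite !inE; apply/negP=> /andP [/eqP -> /eqP e2]; move: hab; rewrite e2 eqxx.
  by rewrite imset0.
have stepB1 : forall a, a != z0 -> f @: D q a = D q a.
  move=> a ha; have [j [c e]] := img q a.
  have := cnt (D q a) (widen_ord (leqnSn r) a); rewrite e (Cla ha) setIid card_D => hc.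
  have hs : D j c \subset D q a.
    have : D j c :&: D q a == D j c by rewrite eqEcard subsetIl hc card_D leqnn.
    by move/eqP/setIidPl.
  by have [ej ec] := dict_sub hs; rewrite ej ec.
have stepB : forall a, f @: D q a = D q a.
  move=> a; case: (eqVneq a z0) => [->|ha]; last exact: stepB1.
  have [j [c e]] := img q z0.
  have jq : j = q by apply: (same q z0 z1 j c q z1 z01 e (stepB1 _ _)); rewrite eq_sym z01.
  subst j; case: (eqVneq c z0) => [ec|hc]; first by rewrite e ec.
  have : D q z0 = D q c by apply: finj; rewrite /= e stepB1.
  by move/eqP; rewrite eqEsubset => /andP [/dict_sub [_ ce] _]; move: hc; rewrite ce eqxx.
have stepC : forall i, i != q -> forall b, f @: D i b = D i b.
  move=> i hi; have [j [c0 e0]] := img i z0.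
  have jq : j != q.
    apply/negP=> /eqP ejq; subst j.
    have : D i z0 = D q c0 by apply: finj; rewrite /= e0 stepB.
    by move/eqP; rewrite eqEsubset => /andP [/dict_sub [ie _] _]; move: hi; rewrite ie eqxx.
  have ex : forall b, exists c, f @: D i b = D j c.
    move=> b; have [j' [c e]] := img i b.
    case: (eqVneq b z0) => [eb|nb]; first by exists c0; rewrite eb.
    by exists c; rewrite e (same i b z0 j' c j c0 nb e e0).
  pose sg b := odflt z0 [pick c | f @: D i b == D j c].
  have hsg : forall b, f @: D i b = D j (sg b).
    move=> b; rewrite /sg; case: pickP => [c /eqP //|hn].
    by have [c e] := ex b; move: (hn c); rewrite e eqxx.
  have hN : forall b, Ncnt j (sg b) = Ncnt i b.
    move=> b; rewrite /Ncnt setIC -ClR -hsg cnt ClR setIC //.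
  have incr : forall a b : 'I_r, a < b -> sg a < sg b.
    move=> a b hab; have h1 := Mlt hi hab; rewrite -!hN in h1.
    case: (ltngtP (sg a) (sg b)) => // [gt|eq].
      by have := Mlt jq gt; lia.
    by move: h1; rewrite (val_inj eq) ltnn.
  have sid := incr_id incr.
  have ij : i = j.
    have h0 := hN z0; rewrite sid in h0.
    case: (ltngtP i j) => [lt|gt|eq]; last exact: val_inj.
      by have := N0_lt hi jq lt; lia.
    by have := N0_lt jq hi gt; lia.
  by move=> b; rewrite hsg sid ij.
apply/permP=> x; rewrite perm1; apply/ffunP=> i.
have : f x \in f @: D i (x i) by apply: imset_f; rewrite in_D.
case: (eqVneq i q) => [->|hi]; first by rewrite stepB in_D => /eqP.
by rewrite stepC // in_D => /eqP.
Qed.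
End Main.

Theorem mainTheorem7 (r n : nat) (hr : 3 <= r) (hn : 4 <= n) :
  chi_D_eq (@Kpow_adj r n) r.+1.
Proof.
case: r hr => [|p] // hr; case: n hn => [|k] // hn.
have hp : 1 < p by [].
have hk : 2 < k by [].
split.
  exists (@col p k); split; [exact: (@col_proper p k) | exact: (@col_dist p k hp hk)].
by move=> m [c [hc hd]]; exact: (@lower p k hp hk m c hc hd).
Qed.
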